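(* Let $P$ be a causal stable system on $\mathcal{L}_{2e+}^n$ that is very strictly passive, i.e., there exist $\nu,\rho>0$ such that $$\langle u,Pu\rangle\ge\nu\|u\|_2^2+\rho\|Pu\|_2^2\quad\forall u\in\mathcal{L}_{2+}.$$ Then $\theta(P)\le\arccos\big(2\sqrt{\nu\rho}\big)<\pi/2$.
   Context: For $n\ge1$, $\mathcal{L}_2^n$ is the set of measurable $u:\mathbb{R}\to\mathbb{R}^n$ with $\|u\|_2^2=\int|u(t)|^2dt<\infty$, inner product $\langle u,v\rangle=\int u(t)^Tv(t)\,dt$; $\mathcal{L}_{2+}=\{u\in\mathcal{L}_2:u(t)=0\ \text{for}\ t<0\}$. For $T\ge0$, $(\Gamma_Tu)(t)=u(t)$ for $t\le T$, $0$ for $t>T$; $\mathcal{L}_{2e+}=\{u:\Gamma_Tu\in\mathcal{L}_{2+}\ \forall T\ge0\}$. A system is an operator $P:\mathcal{L}_{2e+}\to\mathcal{L}_{2e+}$ with $P0=0$, $P\ne0$; causal if $\Gamma_TP=\Gamma_TP\Gamma_T$ for all $T\ge0$; a causal system is stable if $Pu\in\mathcal{L}_{2+}$ for all $u\in\mathcal{L}_{2+}$ and $\sup_{0\ne u\in\mathcal{L}_{2+}}\|Pu\|_2/\|u\|_2<\infty$. The singular angle $\theta(P)\in[0,\pi]$ is given by $\cos\theta(P)=\inf\{\langle u,Pu\rangle/(\|u\|_2\|Pu\|_2):0\neq u\in\mathcal{L}_{2+},\ Pu\ne0\}$. *)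

(* Defs.v *)
From HB Require Import structures.
From mathcomp Require Import all_boot all_order all_algebra.
From mathcomp Require Import all_classical all_reals all_analysis.
Set Implicit Arguments. Unset Strict Implicit. Unset Printing Implicit Defensive.
Import Order.TTheory GRing.Theory Num.Theory.
Local Open Scope classical_set_scope.
Local Open Scope ring_scope.

Definition signal (R : realType) (n : nat) := R -> 'I_n -> R.

Definition sqnorm (R : realType) (n : nat) (x : 'I_n -> R) : R :=
  \sum_(i < n) x i ^+ 2.

Definition L2 (R : realType) (n : nat) (u : signal R n) : Prop :=
  (forall i : 'I_n, measurable_fun [set: R] (fun t => u t i)) /\
  (\int[@lebesgue_measure R]_(t in [set: R]) (sqnorm (u t))%:E < +oo)%E.

Definition L2p (R : realType) (n : nat) (u : signal R n) : Prop :=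
  L2 u /\ (forall t, t < 0 -> u t = (fun _ => 0)).

Definition trunc (R : realType) (n : nat) (T : R) (u : signal R n) : signal R n :=
  fun t => if t <= T then u t else (fun _ => 0).

Definition L2ep (R : realType) (n : nat) (u : signal R n) : Prop :=
  forall T : R, 0 <= T -> L2p (trunc T u).

Definition inner (R : realType) (n : nat) (u v : signal R n) : R :=
  Rintegral (@lebesgue_measure R) [set: R] (fun t => \sum_(i < n) u t i * v t i).

Definition norm2 (R : realType) (n : nat) (u : signal R n) : R :=
  Num.sqrt (inner u u).

Definition zero_signal (R : realType) (n : nat) : signal R n := fun _ _ => 0.

Definition is_system (R : realType) (n : nat) (P : signal R n -> signal R n) : Prop :=
  (forall u, L2ep u -> L2ep (P u)) /\
  P (@zero_signal R n) = @zero_signal R n /\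
  (exists u, L2ep u /\ P u <> @zero_signal R n).

Definition causal (R : realType) (n : nat) (P : signal R n -> signal R n) : Prop :=
  forall (T : R) (u : signal R n), 0 <= T -> L2ep u ->
    trunc T (P u) = trunc T (P (trunc T u)).

(* nonzero elements of L2 are those of nonzero norm (L2 is a space of classes) *)
Definition stable (R : realType) (n : nat) (P : signal R n -> signal R n) : Prop :=
  (forall u, L2p u -> L2p (P u)) /\
  (exists c : R, forall u, L2p u -> norm2 u != 0 -> norm2 (P u) / norm2 u <= c).

Definition singular_angle (R : realType) (n : nat) (P : signal R n -> signal R n) : R :=
  acos (inf [set r | exists u, [/\ L2p u, norm2 u != 0, norm2 (P u) != 0 &
                                   r = inner u (P u) / (norm2 u * norm2 (P u))]]).

(* Main.v *)
Require Import Defs.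
From HB Require Import structures.
From mathcomp Require Import all_boot all_order all_algebra.
From mathcomp Require Import all_classical all_reals all_analysis.
From mathcomp Require Import measurable_realfun ring lra.
Import Order.TTheory GRing.Theory Num.Theory.
Local Open Scope ring_scope.

Module Helpers.
Set Implicit Arguments. Unset Strict Implicit.
Local Open Scope classical_set_scope.

Section Aux.
Variable R : realType.
Variable n : nat.
Notation mu := (@lebesgue_measure R).

Lemma sqnorm_ge0 (x : 'I_n -> R) : 0 <= sqnorm x.
Proof. by apply: sumr_ge0 => i _; apply: sqr_ge0. Qed.

Lemma sqnorm_meas (u : signal R n) : L2 u ->
  measurable_fun [set: R] (fun t => sqnorm (u t)).
Proof.
move=> [mu_ _]; rewrite /sqnorm.
by apply: measurable_sum => i; apply: measurable_funX.
Qed.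

Lemma sq_int (u : signal R n) : L2 u ->
  mu.-integrable [set: R] (EFin \o (fun t => sqnorm (u t))).
Proof.
move=> hu; have hm := sqnorm_meas hu.
apply/integrableP; split; first exact/measurable_EFinP.
case: hu => _ hfin.
apply: le_lt_trans hfin; rewrite le_eqVlt; apply/orP; left; apply/eqP.
apply: eq_integral => t _ /=.
by rewrite ger0_norm // sqnorm_ge0.
Qed.

Lemma abs_prod_le (x y : R) : `|x * y| <= x ^+ 2 + y ^+ 2.
Proof. rewrite ler_norml; apply/andP; split; nra. Qed.

Lemma prod_int (u v : signal R n) : L2 u -> L2 v ->
  mu.-integrable [set: R] (EFin \o (fun t => \sum_(i < n) u t i * v t i)).
Proof.
move=> hu hv.
have hi := integrableD (measurableT) (sq_int hu) (sq_int hv).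
apply: (le_integrable measurableT _ _ hi).
  apply/measurable_EFinP; apply: measurable_sum => i.
  exact: (measurable_funM (f:=fun t => u t i) (g:=fun t => v t i) (hu.1 i) (hv.1 i)).
move=> t _ /=.
rewrite lee_fin (@ger0_norm _ (_ + _)); last first.
  by apply: addr_ge0; apply: sqnorm_ge0.
apply: le_trans (ler_norm_sum _ _ _) _.
rewrite /sqnorm -big_split /=; apply: ler_sum => i _; exact: abs_prod_le.
Qed.

Lemma inner_ge0 (u : signal R n) : 0 <= inner u u.
Proof. by apply: Rintegral_ge0 => t _; apply: sumr_ge0 => i _; apply: sqr_ge0. Qed.

Lemma inner_sq (u : signal R n) : inner u u =
  Rintegral mu [set: R] (fun t => sqnorm (u t)).
Proof. by apply: eq_Rintegral => t _; rewrite /sqnorm; apply: eq_bigr => i _; rewrite expr2. Qed.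

Lemma norm2_sq (u : signal R n) : norm2 u ^+ 2 = inner u u.
Proof. by rewrite /norm2 sqr_sqrtr // inner_ge0. Qed.

Lemma norm2_ge0 (u : signal R n) : 0 <= norm2 u.
Proof. exact: sqrtr_ge0. Qed.

Lemma pt_amgm (t x y : R) : 0 < t -> x * y <= t / 2 * x ^+ 2 + (2 * t)^-1 * y ^+ 2.
Proof.
move=> t0.
have h : t / 2 * x ^+ 2 + (2 * t)^-1 * y ^+ 2 - x * y = (t * x - y) ^+ 2 / (2 * t).
  by field; rewrite gt_eqF.
rewrite -subr_ge0 h; apply: divr_ge0; [exact: sqr_ge0| nra].
Qed.

Lemma inner_amgm (u v : signal R n) (t : R) : L2 u -> L2 v -> 0 < t ->
  inner u v <= t / 2 * inner u u + (2 * t)^-1 * inner v v.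
Proof.
move=> hu hv t0; rewrite !inner_sq.
rewrite -(RintegralZl _ _ (sq_int hu)) // -(RintegralZl _ _ (sq_int hv)) //.
rewrite -RintegralD //; last 2 first.
- apply: (eq_integrable measurableT _ _ _ (integrableZl measurableT _ (sq_int hu))).
  by move=> x _ /=; rewrite EFinM.
- apply: (eq_integrable measurableT _ _ _ (integrableZl measurableT _ (sq_int hv))).
  by move=> x _ /=; rewrite EFinM.
apply: le_Rintegral => //.
- exact: prod_int.
- apply: (eq_integrable measurableT _ _ _ (integrableD measurableT (integrableZl measurableT (t/2) (sq_int hu)) (integrableZl measurableT (2*t)^-1 (sq_int hv)))).
  by move=> x _ /=; rewrite -!EFinM -EFinD.
move=> x _; rewrite /sqnorm !mulr_sumr -big_split /=.
by apply: ler_sum => i _; apply: pt_amgm.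
Qed.

Lemma real_cs (x a b : R) : 0 <= a -> 0 <= b ->
  (forall t, 0 < t -> x <= t / 2 * a ^+ 2 + (2 * t)^-1 * b ^+ 2) -> x <= a * b.
Proof.
move=> a0 b0 H.
have [a0'|ha] := ltP 0 a.
  have [b0'|hb] := ltP 0 b.
    have := H (b / a) (divr_gt0 b0' a0').
    have -> : b / a / 2 * a ^+ 2 + (2 * (b / a))^-1 * b ^+ 2 = a * b.
      by field; rewrite !gt_eqF.
    done.
  rewrite leNgt; apply/negP => xab.
  have b_0 : b = 0 by apply/eqP; rewrite eq_le hb b0.
  subst b; rewrite mulr0 in xab.
  have := H (x / (a ^+ 2)) (divr_gt0 xab (exprn_gt0 _ a0')).
  have -> : x / a ^+ 2 / 2 * a ^+ 2 + (2 * (x / a ^+ 2))^-1 * 0 ^+ 2 = x / 2.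
    by field; rewrite !gt_eqF.
  lra.
have a_0 : a = 0 by apply/eqP; rewrite eq_le ha a0.
subst a; rewrite mul0r leNgt; apply/negP => xab.
have hb1 : 0 < b ^+ 2 + 1 by rewrite ltr_pwDr ?ltr01 ?sqr_ge0.
have := H ((b ^+ 2 + 1) / x) (divr_gt0 hb1 xab).
have -> : (b ^+ 2 + 1) / x / 2 * 0 ^+ 2 + (2 * ((b ^+ 2 + 1) / x))^-1 * b ^+ 2
   = x * (b ^+ 2 / (b ^+ 2 + 1)) / 2.
  by field; rewrite !gt_eqF.
have : b ^+ 2 / (b ^+ 2 + 1) < 1.
  by rewrite ltr_pdivrMr // mul1r ltrDl ltr01.
nra.
Qed.

Lemma cs (u v : signal R n) : L2 u -> L2 v -> inner u v <= norm2 u * norm2 v.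
Proof.
move=> hu hv; apply: real_cs; rewrite ?norm2_ge0 // => t t0.
by rewrite !norm2_sq; apply: inner_amgm.
Qed.

End Aux.

Lemma exists_u0 (R : realType) (n : nat) : (0 < n)%N ->
  exists u : signal R n, L2p u /\ norm2 u != 0.
Proof.
move=> hn.
pose A : set R := `[(0:R), 1].
have mA := @measurable_itv R (`[(0:R), 1])%R.
have hI : (@lebesgue_measure R).-integrable [set: R] (EFin \o (\1_A : R -> R)).
  exact: (@integrable_indic_itv R 0 1 true false).
pose u0 : signal R n := fun t _ => (\1_A t : R).
have sq : forall t, sqnorm (u0 t) = n%:R * (\1_A t : R).
  move=> t; rewrite /sqnorm /u0 sumr_const card_ord mulr_natl.
  by congr (_ *+ _); rewrite /indic; case: (_ \in _); rewrite ?expr1n ?expr0n.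
have hI2 : (@lebesgue_measure R).-integrable [set: R] (EFin \o (fun t => sqnorm (u0 t))).
  apply: (eq_integrable measurableT _ _ _ (integrableZl measurableT (n%:R) hI)).
  by move=> x _ /=; rewrite sq EFinM.
have hint : Rintegral (@lebesgue_measure R) [set: R] (fun t => (\1_A t : R)) = 1.
  rewrite /Rintegral integral_indic // setIT /A.
  have h := @lebesgue_measure_itv R (`[(0:R), 1])%R. rewrite /= lte_fin ltr01 in h. idtac "GOAL"; match goal with |- ?g => idtac g end. apply: (eq_trans (f_equal fine h)). by rewrite /= subr0.
exists u0; split; first split; first split.
- by move=> i; apply: measurable_indic.
- move/integrableP: hI2 => [_ hlt]; apply: le_lt_trans hlt.
  rewrite le_eqVlt; apply/orP; left; apply/eqP; apply: eq_integral => t _ /=.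
  by rewrite ger0_norm // sqnorm_ge0.
- move=> t t0; apply/funext => i; rewrite /u0 /indic.
  suff -> : (t \in A) = false by [].
  apply/negP => /set_mem; rewrite /A /= in_itv /= => /andP[h _]; by move: h; rewrite leNgt t0.
- have e : inner u0 u0 = Rintegral (@lebesgue_measure R) [set: R] (fun t => n%:R * (\1_A t : R)).
    by rewrite inner_sq; apply: eq_Rintegral => t _; exact: sq.
  have hpos : 0 < inner u0 u0.
    by rewrite e RintegralZl // ?hint ?mulr1 ?ltr0n.
  apply/eqP => h; have := norm2_sq u0; rewrite h expr0n /= => hh.
  by move: hpos; rewrite -hh ltxx.
Qed.

End Helpers.
Import Helpers.

Lemma acos_inI (R : realType) (x : R) : -1 <= x <= 1 -> acos x \in `[0, pi].
Proof. by move=> hx; rewrite in_itv /= acos_ge0 // acos_lepi. Qed.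

Lemma acos_le (R : realType) (x y : R) : -1 <= y -> y <= x -> x <= 1 ->
  acos x <= acos y.
Proof.
move=> h1 hyx hx1.
have hx : -1 <= x <= 1 by rewrite hx1 (le_trans h1 hyx).
have hy : -1 <= y <= 1 by rewrite h1 (le_trans hyx hx1).
rewrite leNgt; apply/negP => h.
have := ltr_cos (@acos_inI _ _ hy) (@acos_inI _ _ hx).
rewrite h !acosK ?in_itv //= => hh.
by move: hyx; rewrite leNgt hh.
Qed.

Lemma acos_lt_half (R : realType) (c : R) : 0 < c -> c <= 1 -> acos c < pi / 2.
Proof.
move=> c0 c1.
have hc : -1 <= c <= 1 by rewrite c1 andbT; lra.
have h0 : -1 <= (0:R) <= 1 by apply/andP; split; lra.
rewrite -acos0 -(ltr_cos (@acos_inI _ _ hc) (@acos_inI _ _ h0)) !acosK ?in_itv //=.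
Qed.

Theorem proposition2 (R : realType) (n : nat) (hn : (0 < n)%N)
  (P : signal R n -> signal R n)
  (hsys : is_system P) (hcausal : causal P) (hstable : stable P)
  (nu rho : R) (hnu : 0 < nu) (hrho : 0 < rho)
  (hvsp : forall u : signal R n, L2p u ->
     nu * norm2 u ^+ 2 + rho * norm2 (P u) ^+ 2 <= inner u (P u)) :
  singular_angle P <= acos (2 * Num.sqrt (nu * rho)) /\
  acos (2 * Num.sqrt (nu * rho)) < pi / 2.
Proof.
set s := Num.sqrt (nu * rho).
have s_pos : 0 < s by rewrite sqrtr_gt0 mulr_gt0.
have s2 : s ^+ 2 = nu * rho by rewrite sqr_sqrtr // ltW // mulr_gt0.
have key : forall a b : R, 2 * s * (a * b) <= nu * a ^+ 2 + rho * b ^+ 2.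
  move=> a b; rewrite -subr_ge0 -(pmulr_rge0 _ hnu).
  have -> : nu * (nu * a ^+ 2 + rho * b ^+ 2 - 2 * s * (a * b)) =
     (nu * a - s * b) ^+ 2 + (nu * rho - s ^+ 2) * b ^+ 2 by ring.
  by rewrite s2 subrr mul0r addr0 sqr_ge0.
have [u0 [hu0 hnz]] := exists_u0 R hn.
have hv0 := hstable.1 u0 hu0.
have hcs := cs hu0.1 hv0.1.
have hv := hvsp u0 hu0.
have a0p : 0 < norm2 u0 by rewrite lt_def hnz norm2_ge0.
have b0nz : norm2 (P u0) != 0.
  apply/eqP => hb; rewrite hb mulr0 in hcs; rewrite hb in hv.
  have : 0 < nu * norm2 u0 ^+ 2 by rewrite mulr_gt0 // exprn_gt0.
  lra.
have b0p : 0 < norm2 (P u0) by rewrite lt_def b0nz norm2_ge0.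
have abp : 0 < norm2 u0 * norm2 (P u0) by rewrite mulr_gt0.
have c1 : 2 * s <= 1.
  rewrite -(ler_pM2r abp) mul1r.
  exact: le_trans (key _ _) (le_trans hv hcs).
have cpos : 0 < 2 * s by rewrite mulr_gt0.
split; last exact: acos_lt_half.
rewrite /singular_angle.
set S := (X in acos (inf X)).
have r0S : S (inner u0 (P u0) / (norm2 u0 * norm2 (P u0))).
  by exists u0; split.
have lbS : lbound S (2 * s).
  move=> r [u [hu hun hpun ->]].
  have ap : 0 < norm2 u by rewrite lt_def hun norm2_ge0.
  have bp : 0 < norm2 (P u) by rewrite lt_def hpun norm2_ge0.
  rewrite ler_pdivlMr ?mulr_gt0 //.
  exact: le_trans (key _ _) (hvsp u hu).
have hge : 2 * s <= inf S by apply: lb_le_inf => //; exists (inner u0 (P u0) / (norm2 u0 * norm2 (P u0))).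
have hle : inf S <= 1.
  apply: le_trans (ge_inf _ r0S) _; first by exists (2 * s).
  by rewrite ler_pdivrMr // mul1r.
apply: acos_le => //; lra.
Qed.
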